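(* Let $g(x)\in A$. If $f(x)=x^2+ax-1$ for some $a\in\mathbb{F}$, then $M_g^T=M_g$. If $f(x)=x^m\pm1$, then $M_g^T=M_h$, where $h(x)=g(x^{-1})\in A$ (here $x$ is invertible in $A$), equivalently $h(x)=g^R(x)/x^{\deg g}$.
   Context: Let $\mathbb{F}$ be a finite field, $f(x)=x^m+\sum_{i=0}^{m-1}f_ix^i\in\mathbb{F}[x]$ monic of degree $m$, $A=\mathbb{F}[x]/\langle f(x)\rangle$, elements identified with polynomials of degree $<m$. $M_x$ is the $m\times m$ companion matrix of $f$: its $i$-th row is the unit vector $e_{i+1}$ for $1\le i\le m-1$ and its last row is $(-f_0,\ldots,-f_{m-1})$. For $g(x)=\sum_{i=0}^{m-1}a_ix^i\in A$, $M_g=\sum_{i=0}^{m-1}a_iM_x^i$. For $g\in\mathbb{F}[x]$, $g^R(x)=x^{\deg g}g(x^{-1})$ is its reciprocal polynomial. *)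

(* Defs.v *)
From HB Require Import structures.
From mathcomp Require Import all_boot all_algebra.
Set Implicit Arguments. Unset Strict Implicit. Unset Printing Implicit Defensive.
Import GRing.Theory.
Local Open Scope ring_scope.

(* Companion matrix M_x of f (f monic of degree m): for 0-based row i < m-1
   the row is the unit vector e_{i+1}; the last row is (-f_0, ..., -f_{m-1}). *)
Definition compmx (F : nzRingType) (m : nat) (f : {poly F}) : 'M[F]_m :=
  \matrix_(i < m, j < m)
    if (i.+1 < m)%N then ((j : nat) == i.+1)%:R else - f`_j.

Definition Mg (F : nzRingType) (m : nat) (f g : {poly F}) : 'M[F]_m :=
  \sum_(i < m) g`_i *: (compmx m f) ^+ i.

(* Reciprocal polynomial g^R(x) = x^{deg g} g(1/x) (with 0^R = 0). *)
Definition recip (F : nzRingType) (g : {poly F}) : {poly F} :=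
  \poly_(i < size g) g`_((size g).-1 - i).

(* Main.v *)
Require Import Defs.
From HB Require Import structures.
From mathcomp Require Import all_boot all_algebra zify.
Import GRing.Theory.
Local Open Scope ring_scope.

Section S.
Variable F : fieldType.

Lemma modp_sumL (I : Type) (r : seq I) (P : pred I) (G : I -> {poly F}) (d : {poly F}) :
  (\sum_(i <- r | P i) G i) %% d = \sum_(i <- r | P i) (G i %% d).
Proof.
elim/big_rec2: _ => [|i a b _ <-]; first by rewrite mod0p.
by rewrite modpD.
Qed.

Lemma trmxX n (A : 'M[F]_n) k : (A ^+ k)^T = A^T ^+ k.
Proof.
elim: k => [|k IH]; first by rewrite !expr0 trmx1.
by rewrite exprS exprSr -IH trmx_mul.
Qed.

Lemma Mg_tr m (f g : {poly F}) :
  (Mg m f g)^T = \sum_(i < m) g`_i *: (compmx m f)^T ^+ i.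
Proof.
rewrite /Mg.
elim/big_rec2: _ => [|i a b _ <-]; first by rewrite trmx0.
by rewrite linearD linearZ /= trmxX.
Qed.

Lemma sum_widen (g : {poly F}) k (V : lmodType F) (G : nat -> V) :
  (size g <= k)%N ->
  \sum_(i < size g) g`_i *: G i = \sum_(i < k) g`_i *: G i.
Proof.
move=> hk; rewrite (big_ord_widen k (fun i => g`_i *: G i) hk) big_mkcond /=.
apply: eq_bigr => i _; case: ifP => // /negbT; rewrite -leqNgt => h.
by rewrite nth_default // scale0r.
Qed.

Lemma horner_mx_sum n (M : 'M[F]_n.+1) (g p : {poly F}) :
  horner_mx M (g \Po p) = \sum_(i < size g) g`_i *: (horner_mx M p) ^+ i.
Proof.
rewrite comp_polyE linear_sum; apply: eq_bigr => i _.
by rewrite linearZ rmorphXn.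
Qed.

Lemma Mg_horner n (f g : {poly F}) : (size g <= n.+1)%N ->
  Mg n.+1 f g = horner_mx (compmx n.+1 f) g.
Proof.
move=> hg; rewrite -{2}(comp_polyXr g) horner_mx_sum horner_mx_X.
by rewrite (@sum_widen _ _ _ _ hg).
Qed.

Lemma horner_mx_mod n (f p : {poly F}) (M : 'M[F]_n.+1) :
  horner_mx M f = 0 -> horner_mx M (p %% f) = horner_mx M p.
Proof.
move=> h; rewrite {2}(divp_eq p f) rmorphD rmorphM /= h mulr0 add0r.
by [].
Qed.

Lemma XuK (f u : {poly F}) k v : ('X * u) %% f = 1 ->
  ((('X * u) ^+ k) * v) %% f = v %% f.
Proof.
move=> h; elim: k v => [|k IH] v; first by rewrite expr0 mul1r.
rewrite exprS -mulrA mulrC -modp_mul h mulr1.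
by rewrite IH.
Qed.

Lemma recip_comp (f g u : {poly F}) : ('X * u) %% f = 1 ->
  (g \Po u) %% f = (recip g * u ^+ (size g).-1) %% f.
Proof.
move=> h; rewrite /recip poly_def mulr_suml comp_polyE !modp_sumL.
rewrite (reindex_inj rev_ord_inj) /=.
apply: eq_bigr => i _.
have hi := ltn_ord i.
move: hi; move: (i : nat) => {}i hi.
have [d hs] : exists d, size g = d.+1.
  by exists (size g).-1; rewrite prednK // (leq_ltn_trans (leq0n _) hi).
rewrite hs /= in hi *.
have e2 : (d.+1 - i.+1 = d - i)%N by lia.
rewrite e2 -scalerAl !modpZl; congr (_ *: _).
rewrite -{2}(subnKC (_ : (i <= d)%N)); last by lia.
rewrite exprD mulrA -exprMn.
by rewrite XuK.
Qed.

Lemma compmx_entry n (c : F) (i k : 'I_n.+1) :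
  compmx n.+1 ('X^(n.+1) + c%:P) i k =
  (if (i.+1 < n.+1)%N then 1 else - c) * (k == ordS i)%:R.
Proof.
rewrite mxE -val_eqE /=.
case: ifP => hi.
  by rewrite mul1r modn_small.
have hin : (i : nat) = n by have := ltn_ord i; move: hi; clear; lia.
rewrite hin modnn coefD coefXn coefC.
have -> : ((k : nat) == n.+1) = false by have := ltn_ord k; clear; lia.
rewrite add0r; case: eqP => _; first by rewrite mulr1.
by rewrite mulr0 oppr0.
Qed.

Lemma compmx_orth n (c : F) : c * c = 1 ->
  compmx n.+1 ('X^(n.+1) + c%:P) *m (compmx n.+1 ('X^(n.+1) + c%:P))^T = 1%:M.
Proof.
move=> hc; apply/matrixP => i j.
have tr : forall (A : 'M[F]_n.+1) a b, A^T a b = A b a by move=> A a b; rewrite mxE.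
rewrite [LHS]mxE [RHS]mxE.
rewrite (bigD1 (ordS i)) //= big1; last first.
  by move=> k hk; rewrite tr !compmx_entry (negPf hk) mulr0 mul0r.
rewrite addr0 tr !compmx_entry eqxx mulr1 (inj_eq (@ordS_inj _)).
case: eqP => [->|_]; last by rewrite !mulr0.
by rewrite mulr1; case: ifP => _; rewrite ?mulr1 ?mulrNN.
Qed.

End S.
Lemma char_poly_cast (R : comNzRingType) d k (A : 'M[R]_d) (e : d = k) :
  char_poly (castmx (e, e) A) = char_poly A.
Proof. subst d; by rewrite castmx_id. Qed.

Lemma compmx_root (F : comNzRingType) n (f : {poly F}) :
  f \is monic -> size f = n.+2 -> horner_mx (compmx n.+1 f) f = 0.
Proof.
move=> fm sf.
have e : (size f).-1 = n.+1 by rewrite sf.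
have -> : compmx n.+1 f = castmx (e, e) (companionmx f).
  apply/matrixP => i j; rewrite castmxE !mxE /=.
  have e2 : (size f).-2 = n by rewrite sf.
  rewrite e2.
  have := ltn_ord i; case: ifP => [hi|/negbT hi] hi2.
    rewrite ifN; last by apply/eqP => h; move: hi; rewrite h ltnn.
    by rewrite eq_sym.
  by rewrite ifT //; apply/eqP; move: hi hi2; clear; lia.
have := Cayley_Hamilton (castmx (e, e) (companionmx f)).
by rewrite char_poly_cast companionmxK.
Qed.

Lemma tr2 (F : fieldType) a (f : {poly F}) : f = 'X^2 + a *: 'X - 1 ->
  (compmx 2 f)^T = compmx 2 f.
Proof.
move=> hf; apply/matrixP => i j; rewrite [LHS]mxE !mxE hf.
case: i => [[|[|?]] ?] //; case: j => [[|[|?]] ?] //=.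
all: by rewrite !coefB !coefD !coefXn coefZ coefX coefC /= mulr0 add0r sub0r opprK.
Qed.

Theorem mainTheorem14 (F : finFieldType) (m : nat) (f g : {poly F}) :
  f \is monic -> size f = m.+1 -> (size g <= m)%N ->
  (forall a : F, f = 'X^2 + a *: 'X - 1 -> (Mg m f g)^T = Mg m f g) /\
  (forall c : F, (c = 1 \/ c = -1) -> f = 'X^m + c%:P ->
     (exists u : {poly F}, ('X * u) %% f = 1) /\
     (forall u : {poly F}, ('X * u) %% f = 1 ->
        (Mg m f g)^T = Mg m f ((g \Po u) %% f) /\
        (g \Po u) %% f = (recip g * u ^+ (size g).-1) %% f)).
Proof.
move=> fm sf sg; split.
  move=> a hf.
  have m2 : m = 2%N.
    have : size f = 3%N.
      rewrite hf -addrA size_addl ?size_polyXn //.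
      rewrite (leq_ltn_trans (size_add _ _)) // size_opp size_poly1.
      by rewrite gtn_max /= (leq_ltn_trans (size_scale_leq _ _)) // size_polyX.
    by rewrite sf => -[].
  subst m; rewrite Mg_tr (@tr2 _ a f hf) /Mg.
  by [].
move=> c hc hf.
have cc : c * c = 1 by case: hc => ->; rewrite ?mulrNN mulr1.
case: m sf sg hf => [|n] sf sg hf.
  exfalso; move: fm; rewrite hf expr0 -polyCD monicE lead_coefC.
  move/eqP => h; have c0 : c = 0 by apply: (addrI 1); rewrite h addr0.
  move: c0.
  by case: hc => ->; [apply/eqP; rewrite oner_eq0 | apply/eqP; rewrite oppr_eq0 oner_eq0].
have sf2 : size f = n.+2 by [].
have root := @compmx_root _ n f fm sf2.
split.
  exists (- c *: 'X^n).
  have -> : 'X * (- c *: 'X^n) = (- c)%:P * f + 1.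
    rewrite hf -mul_polyC mulrCA -exprS mulrDr -polyCM mulNr cc polyCN.
    by rewrite polyCN polyC1 addrNK.
  by rewrite modp_addl_mul_small // size_poly1 sf.
move=> u hu; split; last exact: recip_comp.
set M := compmx n.+1 f.
have hm p : horner_mx M (p %% f) = horner_mx M p := @horner_mx_mod _ n f p M root.
have H1 : horner_mx M ('X * u) = 1%:M by rewrite -hm hu rmorph1.
have MU : M *m horner_mx M u = 1%:M.
  by rewrite -H1 rmorphM /= horner_mx_X mulmxE.
have UM : horner_mx M u *m M = 1%:M.
  by rewrite -H1 mulrC rmorphM /= horner_mx_X mulmxE.
have orth : M *m M^T = 1%:M by rewrite /M hf compmx_orth.
have MT : M^T = horner_mx M u.
  by rewrite -[M^T]mul1mx -UM -mulmxA orth mulmx1.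
rewrite Mg_tr MT Mg_horner; last first.
  by rewrite -ltnS -sf2 ltn_modp -size_poly_gt0 sf2.
rewrite hm horner_mx_sum.
by rewrite (@sum_widen _ _ _ _ _ sg).
Qed.
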